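(* Let $T=(G,N,\psi)$ be a triple, $T'=(G',N',\psi')$ a linear reduction of $T$ with central character $\zeta'$, and $H$ a subgroup of $G$ with $N\le H$. Then $H':=H\cap G'=H(\zeta')$. Moreover, if $\psi$ extends to $H(\psi)$, then $\psi'$ extends to $H'(\psi)=H'(\psi')$.
   Context: $\mathrm{Irr}(X)$, $\mathrm{Lin}(X)$: complex irreducible, resp. linear, characters of a finite group $X$; $K(\phi)$ is the stabilizer of $\phi$ in $K$. A triple is $T=(G,N,\psi)$ with $G$ finite, $N\trianglelefteq G$, $\psi\in\mathrm{Irr}(N)$. The center $Z(T)$ is the center $Z(\psi^G)=\{g\in G:|\psi^G(g)|=\psi^G(1)\}$ of $\psi^G$, and the central character $\zeta^{(T)}$ is the unique linear character of $Z(T)$ lying under $\psi^G$. If $L\trianglelefteq G$, $L\le N$, and $\lambda\in\mathrm{Lin}(L)$ lies under $\psi$, the direct linear reduction $T(\lambda)$ is $(G(\lambda),N(\lambda),\psi_\lambda)$, with $\psi_\lambda$ the $\lambda$-Clifford correspondent of $\psi$ (unique irreducible character of $N(\lambda)$ over $\lambda$ inducing $\psi$). A linear reduction of $T$ is a triple obtained from $T$ by a finite chain of direct linear reductions. *)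

(* Defs.v *)
From HB Require Import structures.
From mathcomp Require Import all_boot all_order all_algebra all_fingroup all_solvable all_field all_character.
Set Implicit Arguments. Unset Strict Implicit. Unset Printing Implicit Defensive.
Import GroupScope GRing.Theory Num.Theory.
Local Open Scope ring_scope.

Record triple (gT : finGroupType) := Triple {
  tG : {group gT};
  tN : {group gT};
  tpsi : 'CF(tN) }.

Definition is_triple (gT : finGroupType) (T : triple gT) : Prop :=
  tN T <| tG T /\ tpsi T \in irr (tN T).

(* T' is a direct linear reduction T(lambda) of the triple T, for some
   L normal in G, L <= N, lambda linear character of L lying under psi:
   G' = G(lambda), N' = N(lambda) (stabilizers), psi' the lambda-Clifford
   correspondent of psi: irreducible character of N(lambda) lying over
   lambda and inducing psi. *)
Definition direct_lin_red (gT : finGroupType) (T T' : triple gT) : Prop :=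
  is_triple T /\
  exists (L : {group gT}) (lam : 'CF(L)),
    [/\ L <| tG T, L \subset tN T, lam \is a linear_char &
        '['Res[L] (tpsi T), lam] != 0] /\
    [/\ tG T' :=: 'I_(tG T)[lam],
        tN T' :=: 'I_(tN T)[lam],
        tpsi T' \in irr (tN T'),
        '['Res[L] (tpsi T'), lam] != 0 &
        'Ind[tN T] (tpsi T') = tpsi T].

Inductive lin_red (gT : finGroupType) (T : triple gT) : triple gT -> Prop :=
  | lin_red_refl : lin_red T T
  | lin_red_step T1 T2 : lin_red T T1 -> direct_lin_red T1 T2 -> lin_red T T2.

Definition triple_center (gT : finGroupType) (T : triple gT) : {set gT} :=
  ('Z('Ind[tG T] (tpsi T)))%CF.

Definition central_char (gT : finGroupType) (T : triple gT)
    (Z : {group gT}) (zeta : 'CF(Z)) : Prop :=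
  [/\ Z :=: triple_center T, zeta \is a linear_char &
      '['Res[Z] ('Ind[tG T] (tpsi T)), zeta] != 0].

Definition extends_to (gT : finGroupType) (N K : {group gT}) (psi : 'CF(N)) : Prop :=
  exists2 chi : 'CF(K), chi \is a character & 'Res[N] chi = psi.

(* Main.v *)
Require Import Defs.
From HB Require Import structures.
From mathcomp Require Import all_boot all_order all_algebra all_fingroup all_solvable all_field all_character.
From mathcomp Require Import ring.
Set Implicit Arguments. Unset Strict Implicit. Unset Printing Implicit Defensive.
Import GroupScope GRing.Theory Num.Theory Order.TTheory.
Local Open Scope ring_scope.

Section Helpers.
Variable gT : finGroupType.

Lemma cfker_comm (N : {group gT}) (psi : 'CF(N)) x z :
  x \in N -> z \in ('Z(psi))%CF -> [~ x, z] \in cfker psi.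
Proof.
move=> Nx Zz.
have Nz : z \in N := subsetP (cfcenter_sub psi) z Zz.
have nKN : N \subset 'N(cfker psi) := normal_norm (cfker_normal psi).
have nx := subsetP nKN x Nx; have nz := subsetP nKN z Nz.
apply: coset_idr; first by rewrite groupR.
rewrite morphR //.
have : coset (cfker psi) z \in 'Z(N / cfker psi).
  exact: subsetP (cfcenter_subset_center psi) _ (mem_quotient _ Zz).
case/setIP=> _ /centP cz.
apply/eqP/commgP; apply: commute_sym; apply: cz; exact: mem_quotient.
Qed.

Lemma conjg_mulR' (x y : gT) : (x ^ y = x * [~ x, y])%g.
Proof. by rewrite /commg mulKVg. Qed.

Lemma lin_center_fix (N L : {group gT}) (psi : 'CF(N)) (mu : 'CF(L)) z :
  psi \is a character -> L \subset N -> mu \is a linear_char ->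
  '['Res[L] psi, mu] != 0 -> z \in ('Z(psi))%CF -> z \in 'N(L) ->
  (mu ^ z)%CF = mu.
Proof.
move=> Npsi sLN Lmu nz Zz nLz.
have [j Dmu] := irrP (lin_char_irr Lmu).
have kerL : L :&: cfker psi \subset cfker mu.
  rewrite -cfker_Res //; rewrite Dmu; apply: cfker_constt; first exact: cfRes_char.
  by rewrite irr_consttE -Dmu.
apply/cfun_inP=> x Lx; rewrite cfConjgE //.
have Zz' : (z^-1)%g \in ('Z(psi))%CF by rewrite groupV.
have Lxz : (x ^ (z^-1)%g)%g \in L by rewrite memJ_norm ?groupV.
have Lc : [~ x, (z^-1)%g] \in L by rewrite groupM ?groupV // memJ_norm ?groupV.
have Kc : [~ x, (z^-1)%g] \in cfker mu.
  apply: (subsetP kerL); rewrite inE Lc; apply: cfker_comm => //; exact: (subsetP sLN).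
rewrite conjg_mulR' (lin_charM Lmu) //.
by rewrite (cfker1 Kc) (lin_char1 Lmu) mulr1.
Qed.

Lemma mult_constt (L : {group gT}) (lam phi1 phi2 : 'CF(L)) c :
  lam \in irr L -> phi1 \is a character -> phi2 \is a character ->
  phi1 + phi2 = c *: lam -> phi1 = '[phi1, lam] *: lam.
Proof.
move=> /irrP[j ->] N1 N2 E.
rewrite {1}(cfun_sum_cfdot phi1) (bigD1 j) //= big1 ?addr0 // => i nij.
have := congr1 (fun f => '[f, 'chi_i]) E.
rewrite cfdotDl cfdotZl cfdot_irr eq_sym (negbTE nij) mulr0 => /eqP.
rewrite paddr_eq0 ?natr_ge0 ?Cnat_cfdot_char_irr // => /andP[/eqP-> _].
by rewrite scale0r.
Qed.

Lemma clifford_inv (N L : {group gT}) (psi : 'CF(N)) (lam : 'CF(L)) :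
  L <| N -> N \subset 'I[lam] -> psi \in irr N -> lam \in irr L ->
  '['Res[L] psi, lam] != 0 -> 'Res[L] psi = '['Res[L] psi, lam] *: lam.
Proof.
move=> nsLN sNI /irrP[i ->] /irrP[j Dl] nz; subst lam.
have cj : j \in irr_constt ('Res[L] 'chi_i) by rewrite irr_consttE.
rewrite {1}(Clifford_Res_sum_cfclass nsLN cj).
by rewrite cfclass_invariant // big_cons big_nil addr0.
Qed.

Lemma dlr_unfold (T1 T2 : triple gT) : direct_lin_red T1 T2 ->
  is_triple T1 /\ exists (L : {group gT}) (lam : 'CF(L)),
   [/\ L <| tG T1, L \subset tN T1, lam \is a linear_char &
        '['Res[L] (tpsi T1), lam] != 0] /\
   [/\ tG T2 = ('I_(tG T1)[lam])%G, tN T2 = ('I_(tN T1)[lam])%G,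
        tpsi T2 \in irr (tN T2), '['Res[L] (tpsi T2), lam] != 0 &
        'Ind[tN T1] (tpsi T2) = tpsi T1].
Proof.
case=> tr [L [lam [c1 [eG eN c3 c4 c5]]]]; split=> //; exists L, lam; split=> //.
by split=> //; apply: val_inj.
Qed.

Lemma lin_red_cons (T1 T2 T3 : triple gT) :
  direct_lin_red T1 T2 -> lin_red T2 T3 -> lin_red T1 T3.
Proof.
move=> d; elim=> [|T' T'' _ IH d']; first exact: lin_red_step (lin_red_refl _) d.
exact: lin_red_step IH d'.
Qed.

Definition Inv (L : {group gT}) (lam : 'CF(L)) (T : triple gT) : Prop :=
 [/\ L \subset tN T, tN T \subset tG T, tG T \subset 'I[lam],
     tpsi T \in irr (tN T) & exists a, 'Res[L] (tpsi T) = a *: lam].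

Lemma inertia_norm (L : {group gT}) (lam : 'CF(L)) : 'I[lam] \subset 'N(L).
Proof. by apply/subsetP=> y /setIdP[]. Qed.

Lemma Inv_base (T1 T2 : triple gT) (L : {group gT}) (lam : 'CF(L)) :
  is_triple T1 ->
  [/\ L <| tG T1, L \subset tN T1, lam \is a linear_char &
        '['Res[L] (tpsi T1), lam] != 0] ->
  [/\ tG T2 = ('I_(tG T1)[lam])%G, tN T2 = ('I_(tN T1)[lam])%G,
        tpsi T2 \in irr (tN T2), '['Res[L] (tpsi T2), lam] != 0 &
        'Ind[tN T1] (tpsi T2) = tpsi T1] ->
  Inv lam T2.
Proof.
case: T1 => G1 N1 psi1; case: T2 => G2 N2 psi2 /= [nsNG1 _] [nsLG sLN Llam _].
case=> eG eN irr2 nz _; subst G2 N2.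
have sNG := normal_sub nsNG1.
have sLI : L \subset 'I_N1[lam] by rewrite subsetI sLN sub_inertia.
split=> //=; first by rewrite setSI.
  exact: subsetIr.
exists ('['Res[L] psi2, lam]); apply: clifford_inv => //.
- apply: normalS nsLG => //; exact: subset_trans (subsetIl _ _) sNG.
- exact: subsetIr.
- exact: lin_char_irr.
Qed.

Lemma Inv_step (T T' : triple gT) (L : {group gT}) (lam : 'CF(L)) :
  lam \is a linear_char -> Inv lam T -> direct_lin_red T T' -> Inv lam T'.
Proof.
case: T => G N psi; case: T' => G2 N2 psi2.
move=> Llam [/= sLN sNG sGI irrpsi [a Dres]] /dlr_unfold[[/= nsNG _]].
case=> L' [lam' [[/= nsL'G sL'N Llam' nz'] [/= eG eN irr2 nz2 eInd]]].
subst G2 N2.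
have Npsi : psi \is a character by apply: irrWchar.
have a1 : a = psi 1%g.
  by rewrite -(cfRes1 L) Dres cfunE lin_char1 ?mulr1.
have sLI : L \subset 'I[lam'].
  apply/subsetP=> l Ll; rewrite inE.
  have Nl := subsetP sLN l Ll.
  rewrite (subsetP (normal_norm nsL'G)) ?(subsetP sNG) //=.
  apply/eqP; apply: (lin_center_fix Npsi sL'N Llam' nz') => //.
    rewrite char_cfcenterE // -(cfResE psi sLN Ll) Dres cfunE normrM.
    by rewrite normC_lin_char // mulr1 a1 ger0_norm ?char1_ge0.
  exact: (subsetP (normal_norm nsL'G)) (subsetP sNG l Nl).
have sLN2 : L \subset 'I_N[lam'] by rewrite subsetI sLN.
split=> //=.
- by rewrite setSI.
- exact: subset_trans (subsetIl _ _) sGI.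
have [k Dk] := irrP irr2.
have ck : k \in irr_constt ('Res['I_N[lam']] psi).
  by rewrite irr_consttE cfdot_Res_l -Dk eInd irrWnorm ?oner_eq0.
have [rest Nrest Dr] := constt_charP _ (cfRes_char _ Npsi) ck.
have := congr1 (fun f => 'Res[L] f) Dr.
rewrite /= cfResRes ?subsetIl // Dres raddfD /= => E.
exists ('['Res[L] psi2, lam]); rewrite Dk; apply: (mult_constt (lin_char_irr Llam)) (esym E).
- by rewrite cfRes_char ?irr_char.
- exact: cfRes_char.
Qed.

Lemma Ind_irr1_neq0 (G N : {group gT}) (psi : 'CF(N)) :
  N \subset G -> psi \in irr N -> 'Ind[G] psi 1%g != 0.
Proof.
move=> sNG /irrP[i ->]; rewrite cfInd1 // mulf_neq0 ?irr1_neq0 //.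
by rewrite pnatr_eq0 -lt0n indexg_gt0.
Qed.

Lemma central_res (T : triple gT) (Z : {group gT}) (zeta : 'CF(Z)) :
  central_char T zeta ->
  'Res[Z] ('Ind[tG T] (tpsi T)) = ('Ind[tG T] (tpsi T) 1%g) *: zeta.
Proof.
case: T => G N psi; rewrite /central_char /triple_center /=.
set chi := 'Ind[G] psi; case=> eZ Lz nz.
have eZg : Z = cfcenter_group chi by apply: val_inj.
subst Z.
have [z0 Lz0 Dres] := cfcenter_Res chi.
rewrite Dres in nz *; congr (_ *: _).
move: nz; rewrite cfdotZl mulf_eq0 negb_or => /andP[_].
have [i Di] := irrP (lin_char_irr Lz0); have [j Dj] := irrP (lin_char_irr Lz).
by rewrite Di Dj cfdot_irr pnatr_eq0 eqb0 negbK => /eqP->.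
Qed.

Lemma central_inv (T : triple gT) (Z : {group gT}) (zeta : 'CF(Z)) :
  central_char T zeta -> tN T \subset tG T -> tpsi T \in irr (tN T) ->
  tG T \subset 'I[zeta].
Proof.
move=> cc sNG irrpsi; have Dres := central_res cc.
case: cc => eZ _ _.
have nZG : tG T \subset 'N(Z).
  by rewrite eZ; apply: normal_norm; apply: cfcenter_normal.
apply/subsetP=> g Gg; rewrite inE (subsetP nZG) //=.
have nz := Ind_irr1_neq0 sNG irrpsi.
apply/eqP; apply: (scalerI nz).
rewrite -linearZ /= -Dres cfConjgRes_norm ?(subsetP nZG) //.
  by rewrite cfConjg_id.
by rewrite (subsetP (normG _)).
Qed.

Lemma Inv_final (T : triple gT) (L : {group gT}) (lam : 'CF(L))
   (Z : {group gT}) (zeta : 'CF(Z)) :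
  lam \is a linear_char -> Inv lam T -> central_char T zeta ->
  L \subset Z /\ 'Res[L] zeta = lam.
Proof.
move=> Llam [sLN sNG sGI irrpsi [a Dres]] cc.
have Dz := central_res cc; case: cc => eZ _ _.
move: Dz eZ; rewrite /triple_center.
case: T sLN sNG sGI irrpsi Dres => G N psi /= sLN sNG sGI irrpsi Dres.
set chi := 'Ind[G] psi => Dz eZ.
have Npsi : psi \is a character by apply: irrWchar.
have a1 : a = psi 1%g by rewrite -(cfRes1 L) Dres cfunE lin_char1 ?mulr1.
have sLG := subset_trans sLN sNG.
have nLG : G \subset 'N(L) := subset_trans sGI (inertia_norm lam).
have DresL : 'Res[L] chi = (chi 1%g) *: lam.
  apply/cfun_inP=> x Lx; rewrite cfResE // cfunE /chi cfIndE // cfInd1 //.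
  have -> : \sum_(y in G) psi (x ^ y)%g = \sum_(y in G) a * lam x.
    apply: eq_bigr => y Gy.
    have Lxy : (x ^ y)%g \in L by rewrite memJ_norm ?(subsetP nLG).
    rewrite -(cfResE psi sLN Lxy) Dres cfunE inertia_valJ //.
    exact: subsetP sGI y Gy.
  rewrite sumr_const natf_indexg // -a1 -mulr_natr.
  ring.
have sLZ : L \subset Z.
  rewrite eZ; apply/subsetP=> x Lx.
  rewrite char_cfcenterE ?cfInd_char //; last exact: subsetP sLG x Lx.
  rewrite -(cfResE chi sLG Lx) DresL cfunE normrM (normC_lin_char Llam Lx) mulr1.
  by rewrite ger0_norm ?char1_ge0 ?cfInd_char.
split=> //.
have nz : chi 1%g != 0 by apply: Ind_irr1_neq0.
have sZG : Z \subset G by rewrite eZ cfcenter_sub.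
apply: (scalerI nz); rewrite -linearZ /= -Dz cfResRes //.
Qed.

Lemma Inv_red (T Tf : triple gT) (L : {group gT}) (lam : 'CF(L)) :
  lam \is a linear_char -> Inv lam T -> lin_red T Tf -> Inv lam Tf.
Proof.
move=> Llam iT; elim=> // T1 T2 _ IH d; exact: Inv_step Llam IH d.
Qed.

Lemma part1_ind (G N : {group gT}) (psi : 'CF(N)) (Z : {group gT})
   (zeta : 'CF(Z)) (Tf : triple gT) :
  central_char Tf zeta ->
  forall T2, lin_red (@Triple gT G N psi) T2 -> lin_red T2 Tf ->
  forall g, g \in G -> g \in 'I[zeta] -> g \in tG T2.
Proof.
move=> cc T2; elim=> [|T1 T2' r1 IH d] rf g Gg gI; first by [].
have g1 := IH (lin_red_cons d rf) g Gg gI.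
have [tr1 [L [lam [c1 c2]]]] := dlr_unfold d.
have iT2 := Inv_base tr1 c1 c2.
case: c1 => nsLG sLN Llam nz; case: c2 => eG _ _ _ _.
have [sLZ Rz] := Inv_final Llam (Inv_red Llam iT2 rf) cc.
have nLg : g \in 'N(L) := subsetP (normal_norm nsLG) g g1.
have nZg : g \in 'N(Z) := subsetP (inertia_norm zeta) g gI.
rewrite eG /= inE g1 /= inE nLg /=; apply/eqP.
by rewrite -Rz cfConjgRes_norm // (inertiaJ gI).
Qed.

Lemma struct_red (G N : {group gT}) (psi : 'CF(N)) (T : triple gT) :
  is_triple (@Triple gT G N psi) -> lin_red (@Triple gT G N psi) T ->
  [/\ tN T <| tG T, tpsi T \in irr (tN T), tG T \subset G & tN T \subset N].
Proof.
move=> [/= nsNG irrpsi]; elim=> [|T1 T2 _ [nsNG1 _ sG1 sN1] d]; first by [].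
have [_ [L [lam [_ [eG eN irr2 _ _]]]]] := dlr_unfold d.
split; first (rewrite eG eN /=); last 2 first.
- by rewrite eG; exact: subset_trans (subsetIl _ _) sG1.
- by rewrite eN; exact: subset_trans (subsetIl _ _) sN1.
- apply/andP; split; first by rewrite setSI ?normal_sub.
  apply: normsI; first exact: subset_trans (subsetIl _ _) (normal_norm nsNG1).
  exact: subset_trans (subsetIr _ _) (normG _).
- exact: irr2.
Qed.

Lemma clifford_uniq (N L : {group gT}) (lam : 'CF(L))
    (t1 t2 : 'CF('I_N[lam])) :
  L <| N -> lam \in irr L -> t1 \in irr 'I_N[lam] -> t2 \in irr 'I_N[lam] ->
  '['Res[L] t1, lam] != 0 -> '['Res[L] t2, lam] != 0 ->
  'Ind[N] t1 = 'Ind[N] t2 -> t1 = t2.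
Proof.
move=> nsLN /irrP[t Dt]; subst lam.
move=> /irrP[s1 ->] /irrP[s2 ->] nz1 nz2 eI.
have [_ inj _ _ _] := constt_Inertia_bijection t nsLN.
congr 'chi_(_); apply: inj.
- by rewrite constt_Ind_Res irr_consttE.
- by rewrite constt_Ind_Res irr_consttE.
by rewrite /Ind_Iirr eI.
Qed.

Lemma memI (B : {group gT}) (phi : 'CF(B)) y :
  y \in 'N(B) -> (y \in 'I[phi]) = ((phi ^ y)%CF == phi).
Proof. by move=> ny; apply/setIdP/idP=> [[]|] //; split. Qed.

Lemma inertia_equiv (G1 N1 L : {group gT}) (psi1 : 'CF(N1)) (lam : 'CF(L))
    (psi2 : 'CF('I_N1[lam])) g :
  N1 <| G1 -> L <| G1 -> L \subset N1 -> lam \in irr L ->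
  psi2 \in irr 'I_N1[lam] -> '['Res[L] psi2, lam] != 0 ->
  'Ind[N1] psi2 = psi1 -> g \in G1 -> g \in 'I[lam] ->
  (g \in 'I[psi1]) = (g \in 'I[psi2]).
Proof.
move=> nsNG nsLG sLN irrlam irr2 nz2 eI Gg Ig.
have nNg : g \in 'N(N1) := subsetP (normal_norm nsNG) g Gg.
have nLg : g \in 'N(L) := subsetP (normal_norm nsLG) g Gg.
have nKg : g \in 'N('I_N1[lam]).
  rewrite -sub1set normsI // sub1set //; exact: (subsetP (normG _)) g Ig.
rewrite !memI //; apply/eqP/eqP=> E.
  apply: (clifford_uniq (normalS sLN (normal_sub nsNG) nsLG) irrlam) => //.
  - exact: cfConjg_irr.
  - by rewrite -cfConjgRes_norm // -{2}(inertiaJ Ig) cfConjg_iso.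
  by rewrite -cfConjgInd_norm // eI.
by rewrite -eI cfConjgInd_norm // E.
Qed.

Lemma index_le (N1 M K : {group gT}) :
  N1 \subset M -> (#|N1 : N1 :&: K| <= #|M : K|)%N.
Proof.
move=> sNM; rewrite indexgI; apply: subset_leq_card.
apply/subsetP=> X /rcosetsP[x Nx ->]; apply/rcosetsP; exists x => //.
exact: subsetP sNM x Nx.
Qed.

Lemma ext_step (H G1 N1 L : {group gT}) (psi1 : 'CF(N1)) (lam : 'CF(L))
    (psi2 : 'CF('I_N1[lam])) (M : {group gT}) :
  N1 <| G1 -> psi1 \in irr N1 -> L <| G1 -> L \subset N1 ->
  lam \is a linear_char -> '['Res[L] psi1, lam] != 0 ->
  psi2 \in irr 'I_N1[lam] -> '['Res[L] psi2, lam] != 0 ->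
  'Ind[N1] psi2 = psi1 -> N1 \subset H ->
  M = ('I_(H :&: G1)[psi1])%G ->
  extends_to M psi1 -> extends_to ('I_M[lam])%G psi2.
Proof.
move=> nsNG irr1 nsLG sLN Llam nz1 irr2 nz2 eI sNH eM [chi Nchi Rchi].
have sN1M : N1 \subset M.
  by rewrite eM /= !subsetI sNH normal_sub //= sub_inertia.
have sMG : M \subset G1.
  by rewrite eM /=; exact: subset_trans (subsetIl _ _) (subsetIr _ _).
have nsLM : L <| M := normalS (subset_trans sLN sN1M) sMG nsLG.
have irrchi : chi \in irr M.
  have h : 'Res[N1] chi \in irr N1 by rewrite Rchi.
  exact: cfRes_irr_irr Nchi h.
have [t Dt] := irrP (lin_char_irr Llam); subst lam.
have [c Dc] := irrP irrchi; subst chi.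
have [pA _ pB pC _] := constt_Inertia_bijection t nsLM.
have cB : c \in irr_constt ('Ind[M] 'chi_t).
  by rewrite constt_Ind_Res irr_consttE -(cfResRes _ sLN sN1M) Rchi.
have /imsetP[s As Dcs] := (etrans (pB c) cB).
have Dchi : 'chi_c = 'Ind[M] 'chi_s by rewrite Dcs /Ind_Iirr cfIirrE ?pA.
set K := ('I_M['chi_t])%G.
have sN2K : 'I_N1['chi_t] \subset K by rewrite setSI.
have sKM : K \subset M by apply: subsetIl.
have sN2N1 : 'I_N1['chi_t] \subset N1 by apply: subsetIl.
have sLN2 : L \subset 'I_N1['chi_t] by rewrite subsetI sLN sub_inertia.
have [k Dk] := irrP irr2.
have kC : k \in irr_constt ('Res['I_N1['chi_t]] 'chi_c).
  rewrite irr_consttE -(cfResRes _ sN2N1 sN1M) Rchi cfdot_Res_l -Dk eI.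
  by rewrite irrWnorm // oner_eq0.
have /exists_inP[r rC nzr] : [exists r in irr_constt ('Res[K] 'chi_c),
       '['Res['I_N1['chi_t]] 'chi_r, 'chi_k] != 0].
  apply: contraLR kC => /exists_inPn H0; rewrite irr_consttE negbK.
  rewrite -(cfResRes _ sN2K sKM) {1}['Res[K] 'chi_c]cfun_sum_constt.
  rewrite linear_sum cfdot_suml big1 // => r rC.
  by rewrite linearZ cfdotZl (eqP (negbNE (H0 r rC))) mulr0.
have rA : r \in irr_constt ('Ind[K] 'chi_t).
  rewrite constt_Ind_Res -(cfResRes _ sLN2 sN2K).
  apply: (constt_Res_trans (j := k) (cfRes_char _ (irr_char r))).
    by rewrite irr_consttE.
  by rewrite irr_consttE -Dk.
have rs : r = s.
  have h := pC s As r.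
  have : r \in pred1 s by rewrite -h; apply/andP; split; rewrite /= -?Dchi.
  by move/eqP.
subst r.
have kC2 : k \in irr_constt ('Res['I_N1['chi_t]] 'chi_s) by rewrite irr_consttE.
have [rest Nrest Dr] := constt_charP _ (cfRes_char 'I_N1['chi_t] (irr_char s)) kC2.
suffices rest0 : rest = 0.
  by exists 'chi_s; rewrite ?irr_char // Dr Dk rest0 addr0.
have e1 : 'Ind[N1] ('Res['I_N1['chi_t]] 'chi_s) = psi1 + 'Ind[N1] rest.
  by rewrite Dr raddfD /= -Dk eI.
have := congr1 (fun f : 'CF(N1) => f 1%g) e1.
rewrite cfunE !cfInd1 // cfRes1 -Rchi cfRes1 Dchi cfInd1 //.
set x := (#|N1 : _|%:R : algC); set y := (#|M : K|%:R : algC).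
move=> E.
have xy : x <= y.
  rewrite ler_nat; have := index_le K sN1M.
  by rewrite /= setIA (setIidPl sN1M).
have d0 : 0 < 'chi_s 1%g by apply: irr1_gt0.
have w0 : 0 <= rest 1%g by apply: char1_ge0.
have x0 : 0 < x by rewrite ltr0n indexg_gt0.
have : x * rest 1%g <= 0.
  have -> : x * rest 1%g = (x - y) * 'chi_s 1%g.
    by rewrite mulrBl E addrC addKr.
  by rewrite mulr_le0_ge0 ?subr_le0 // Order.POrderTheory.ltW.
rewrite pmulr_rle0 // => w0'.
apply/eqP; rewrite -char1_eq0 //; apply/eqP; apply: le_anti; rewrite w0 w0' //.
Qed.

Lemma part2_ind (G N H : {group gT}) (psi : 'CF(N)) :
  is_triple (@Triple gT G N psi) -> H \subset G -> N \subset H ->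
  extends_to ('I_H[psi])%G psi ->
  forall T, lin_red (@Triple gT G N psi) T ->
  'I_(H :&: tG T)[psi] = 'I_(H :&: tG T)[tpsi T] /\
  extends_to ('I_(H :&: tG T)[tpsi T])%G (tpsi T).
Proof.
move=> tr sHG sNH ext T r; elim: r => [|T1 T2 r1 [E1 E2] d] /=.
  split=> //.
  have -> : ('I_(H :&: G)[psi])%G = ('I_H[psi])%G.
    by apply: val_inj; rewrite /= (setIidPl sHG).
  exact: ext.
have [nsN1G1 irr1 sG1 sN1] := struct_red tr r1.
have [_ [L [lam [[nsLG sLN Llam nz1] [eG eN irr2 nz2 eI]]]]] := dlr_unfold d.
move: E1 E2 nsN1G1 irr1 sN1 nsLG sLN nz1 eG eN irr2 nz2 eI; clear d r1 sG1.
case: T1 => G1 N1 psi1; case: T2 => G2 N2 psi2 /=.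
move=> E1 E2 nsN1G1 irr1 sN1 nsLG sLN nz1 eG eN; subst G2 N2 => irr2 nz2 eI.
have sN1H := subset_trans sN1 sNH.
have irrlam := lin_char_irr Llam.
have key1 : forall x, x \in G1 -> x \in 'I[lam] ->
    (x \in 'I[psi1]) = (x \in 'I[psi2]).
  by move=> x Gx Ix; apply: inertia_equiv nsN1G1 nsLG sLN irrlam irr2 nz2 eI Gx Ix.
split.
  apply/setP=> x; rewrite !in_setI.
  case Hx: (x \in H) => //=; case Gx: (x \in G1) => //=.
  case Ix: (x \in 'I[lam]) => //=.
  have := congr1 (fun A : {set gT} => x \in A) E1.
  by rewrite /= !in_setI Hx Gx /= => ->; apply: key1.
have := ext_step nsN1G1 irr1 nsLG sLN Llam nz1 irr2 nz2 eI sN1H (erefl _) E2.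
have -> : ('I_(H :&: 'I_G1[lam])[psi2])%G = ('I_(('I_(H :&: G1)[psi1])%G)[lam])%G.
  apply: val_inj; apply/setP=> x; rewrite /= !in_setI.
  case Hx: (x \in H) => //=; case Gx: (x \in G1) => //=.
  case Ix: (x \in 'I[lam]) => //=; last by rewrite andbF.
  by rewrite andbT key1.
by [].
Qed.
End Helpers.

Theorem lemma6p2 (gT : finGroupType) (G N : {group gT}) (psi : 'CF(N))
    (T' : triple gT) (Z' : {group gT}) (zeta' : 'CF(Z')) (H : {group gT}) :
  is_triple (@Triple gT G N psi) ->
  lin_red (@Triple gT G N psi) T' ->
  central_char T' zeta' ->
  H \subset G -> N \subset H ->
  H :&: tG T' = 'I_H[zeta'] /\
  (extends_to ('I_H[psi])%G psi ->
     'I_(H :&: tG T')[psi] = 'I_(H :&: tG T')[tpsi T'] /\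
     extends_to ('I_(H :&: tG T')[tpsi T'])%G (tpsi T')).
Proof.
move=> tr r cc sHG sNH.
have [nsNG' irr' sG' sN'] := struct_red tr r.
split; last by move=> ext; exact: part2_ind tr sHG sNH ext T' r.
apply/setP=> x; rewrite !in_setI; case Hx: (x \in H) => //=.
apply/idP/idP => [Gx | Ix].
  exact: subsetP (central_inv cc (normal_sub nsNG') irr') x Gx.
exact: (part1_ind cc r (lin_red_refl T') (subsetP sHG x Hx) Ix).
Qed.
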